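(* Let $T\in(0,\infty)$ and let $A_a(t)\in\mathbb{R}^{N\times N}$, $B_a(t)\in\mathbb{R}^{N\times n_w}$, $Q(t)\in\mathbb{S}^N$, $S(t)\in\mathbb{R}^{N\times n_w}$, $R(t)\in\mathbb{S}^{n_w}$ be continuous functions of $t\in[0,T]$. For a differentiable $Y:[0,T]\to\mathbb{S}^N$ and $W:[0,T]\to\mathbb{S}^N$ write $RDE(t,Y)=W$ for $$\dot Y+A_a^\top Y+YA_a+Q-(YB_a+S)R^{-1}(YB_a+S)^\top=W\quad\text{at time }t.$$ Assume: 1. $R(t)\prec0$ for all $t\in[0,T]$; 2. $Y_0:[0,T]\to\mathbb{S}^N$ is differentiable with $Y_0(T)=0$ and $RDE(t,Y_0)=0$ for all $t\in[0,T]$; 3. $(\epsilon_k)_{k\ge1}$ are positive scalars with $\epsilon_k\ge\epsilon_{k+1}$ for all $k$ and $\lim_{k\to\infty}\epsilon_k=0$; 4. $Y_k:[0,T]\to\mathbb{S}^N$ ($k=1,2,\dots$) are differentiable with $Y_k(T)=0$ and $RDE(t,Y_k)=-\epsilon_k I$ for all $t\in[0,T]$. Then $\lim_{k\to\infty}\|Y_k(t)-Y_0(t)\|=0$ for all $t\in[0,T]$.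
   Context: $\mathbb{S}^n$ denotes the set of real symmetric $n\times n$ matrices; $\prec0$ means negative definite; $\|\cdot\|$ is the matrix induced 2-norm. *)

(* Defs.v *)
From HB Require Import structures.
From mathcomp Require Import all_boot all_order all_algebra.
From mathcomp Require Import all_classical all_reals all_analysis.
Set Implicit Arguments. Unset Strict Implicit. Unset Printing Implicit Defensive.
Import Order.TTheory GRing.Theory Num.Theory.
Import numFieldNormedType.Exports.
Local Open Scope classical_set_scope.
Local Open Scope ring_scope.

Definition symmetric_mx {R : realType} {n : nat} (M : 'M[R]_n) : Prop := M^T = M.

Definition neg_def {R : realType} {n : nat} (M : 'M[R]_n) : Prop :=
  symmetric_mx M /\ forall x : 'cV[R]_n, x != 0 -> (x^T *m M *m x) 0 0 < 0.

Definition eucl_norm {R : realType} {n : nat} (x : 'cV[R]_n) : R :=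
  Num.sqrt (\sum_(i < n) x i 0 ^+ 2).

Definition op2norm {R : realType} {m n : nat} (M : 'M[R]_(m, n)) : R :=
  sup [set eucl_norm (M *m x) | x in [set x : 'cV[R]_n | eucl_norm x <= 1]].

Definition has_deriv_on {R : realType} {n : nat} (T : R)
  (Y Yd : R -> 'M[R]_n) : Prop :=
  forall t, 0 <= t <= T ->
    (fun s => (s - t)^-1 *: (Y s - Y t)) @
      within (fun s => 0 <= s <= T /\ s != t) (nbhs t) --> Yd t.

Definition RDE {R : realType} {N nw : nat}
  (Aa : R -> 'M[R]_N) (Ba : R -> 'M[R]_(N, nw)) (Q : R -> 'M[R]_N)
  (S : R -> 'M[R]_(N, nw)) (Rm : R -> 'M[R]_nw)
  (t : R) (Yt Ydt : 'M[R]_N) : 'M[R]_N :=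
  Ydt + (Aa t)^T *m Yt + Yt *m Aa t + Q t
  - (Yt *m Ba t + S t) *m invmx (Rm t) *m (Yt *m Ba t + S t)^T.

(* Main.v *)
Require Import Defs.
From HB Require Import structures.
From mathcomp Require Import all_boot all_order all_algebra.
From mathcomp Require Import all_classical all_reals all_analysis.
From mathcomp Require Import ring lra.
Import Order.TTheory GRing.Theory Num.Theory.
Import numFieldNormedType.Exports.
Local Open Scope classical_set_scope.
Local Open Scope ring_scope.
Lemma zrearr (V : zmodType) (ydk yd0 a0 ad b0 bd q x00 x0e xe0 xee e : V) :
  ydk + (a0 + ad) + (b0 + bd) + q - (x00 + x0e + xe0 + xee) = - e ->
  yd0 + a0 + b0 + q - x00 = 0 ->
  ydk - yd0 = - e - (ad + bd) + (x0e + xe0 + xee).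
Proof.
move=> h1 h2.
have e2 : yd0 = - (a0 + b0 + q - x00).
  by apply/eqP; rewrite -subr_eq0 opprK -h2 !addrA.
rewrite e2 opprK -h1.
rewrite !opprD ?opprK !addrA.
rewrite (addrAC _ (-bd) x0e) (addrAC _ (-ad) x0e) (addrAC _ (-xee) x0e) (addrAC _ (-xe0) x0e) subrK.
rewrite (addrAC _ (-bd) xe0) (addrAC _ (-ad) xe0) (addrAC _ (-xee) xe0) subrK.
rewrite (addrAC _ (-bd) xee) (addrAC _ (-ad) xee) subrK.
rewrite (addrAC _ (-ad) (-bd)) (addrAC _ (-x00) (-bd)) (addrAC _ q (-bd)) addrK.
rewrite (addrAC _ (-x00) (-ad)) (addrAC _ q (-ad)) (addrAC _ b0 (-ad)) addrK.
by [].
Qed.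
Lemma rde_diff {R : realType} {N nw} {A Q : 'M[R]_N} {B S : 'M[R]_(N,nw)} {Ri : 'M[R]_nw}
  {Y0 D Yd0 Ydk : 'M[R]_N} {e : R} :
  Ydk + A^T *m (Y0 + D) + (Y0 + D) *m A + Q
    - ((Y0 + D) *m B + S) *m Ri *m ((Y0 + D) *m B + S)^T = - e%:M ->
  Yd0 + A^T *m Y0 + Y0 *m A + Q - (Y0 *m B + S) *m Ri *m (Y0 *m B + S)^T = 0 ->
  Ydk - Yd0 = - e%:M - (A^T *m D + D *m A) +
    ((Y0 *m B + S) *m Ri *m (D *m B)^T + (D *m B) *m Ri *m (Y0 *m B + S)^T
     + (D *m B) *m Ri *m (D *m B)^T).
Proof.
move=> h1 h2; apply: zrearr h2; rewrite -h1.
rewrite mulmxDr (mulmxDl Y0 D A) (mulmxDl Y0 D B) (addrAC (Y0 *m B)).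
set K0 := Y0 *m B + S; set E := D *m B.
clearbody K0 E; rewrite !mulmxDl [(K0 + E)^T]raddfD /= !mulmxDr !opprD !addrA.
by [].
Qed.

Section Barrier.
Variable R : realType.

Lemma pos3 {a b c : R} : 0 < a -> 0 < b -> 0 < c ->
  exists2 h, 0 < h & [/\ h < a, h <= b & h <= c].
Proof.
move=> a0 b0 c0; exists (Num.min (Num.min (a / 2) b) c).
  by rewrite lt_min lt_min divr_gt0 ?a0 ?b0 ?c0.
split.
- apply: (@le_lt_trans _ _ (a / 2)); first by rewrite !ge_min lexx.
  by rewrite ltr_pdivrMr // ltr_pMr // ltr1n.
- by rewrite !ge_min lexx orbT.
- by rewrite !ge_min lexx orbT.
Qed.

Lemma expR_negle (x : R) : 0 <= x -> expR (- x) <= 1 - x + x ^+ 2.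
Proof.
move=> x0; rewrite expRN.
have h1 : 1 + x <= expR x := expR_ge1Dx x.
have h1p : 0 < 1 + x by lra.
apply: (@le_trans _ _ ((1 + x)^-1)).
  by rewrite lef_pV2 ?posrE // (lt_le_trans h1p h1).
rewrite -[(1 + x)^-1]mul1r ler_pdivrMr //.
have : 0 <= x ^+ 3 by rewrite exprn_ge0.
rewrite !exprS expr0; nra.
Qed.

Lemma expR_ge1 (x : R) : 0 <= x -> 1 <= expR x.
Proof. move=> x0; apply: le_trans (expR_ge1Dx x); lra. Qed.


Lemma loc_bound {V : normedModType R} {D Dd : R -> V} {tau s eta : R} :
  `|D s - D tau - (s - tau) *: Dd tau| <= eta * `|s - tau| ->
  `|D s - D tau| <= `|s - tau| * (`|Dd tau| + eta).
Proof.
move=> h.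
have -> : D s - D tau = (D s - D tau - (s - tau) *: Dd tau) + (s - tau) *: Dd tau.
  by rewrite subrK.
apply: le_trans (ler_normD _ _) _; rewrite normrZ; lra.
Qed.

Lemma loc_lower {V : normedModType R} {D Dd : R -> V} {tau s eta : R} :
  `|D s - D tau - (s - tau) *: Dd tau| <= eta * `|s - tau| ->
  `|D tau| - `|s - tau| * (`|Dd tau| + eta) <= `|D s|.
Proof.
move=> h; have := loc_bound h => h2.
have := ler_normB (D s) (D s - D tau).
rewrite opprB (addrC (D s)) subrK => h3; lra.
Qed.

Lemma barrier (V : normedModType R) (T L e : R) (D Dd : R -> V) :
  0 < e -> 0 <= L -> D T = 0 ->
  (forall t, 0 <= t <= T -> forall eta, 0 < eta -> exists2 d, 0 < d &
      forall s, 0 <= s <= T -> `|s - t| < d ->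
        `|D s - D t - (s - t) *: Dd t| <= eta * `|s - t|) ->
  (forall t, 0 <= t <= T -> `|D t| <= 1 -> `|Dd t| <= L * `|D t| + e) ->
  2 * e * expR ((L + 1) * T) <= 1 ->
  forall t, 0 <= t <= T -> `|D t| <= 2 * e * expR ((L + 1) * (T - t)).
Proof.
move=> e0 L0 DT loc hyp small t0 /andP[t00 t0T].
set M := L + 1.
have M0 : 0 < M by rewrite /M; lra.
set psi := fun s => 2 * e * expR (M * (T - s)).
have psi_ge : forall s, s <= T -> 2 * e <= psi s.
  move=> s sT; rewrite /psi -[leLHS]mulr1 ler_pM2l; last by lra.
  apply: expR_ge1; apply: mulr_ge0; lra.
have psi_dec : forall s1 s2, s1 <= s2 -> psi s2 <= psi s1.
  move=> s1 s2 h; rewrite /psi ler_pM2l; last by lra.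
  rewrite ler_expR ler_pM2l //; lra.
have psi_le1 : forall s, 0 <= s -> psi s <= 1.
  move=> s s0; apply: le_trans small; have := psi_dec 0 s s0; by rewrite /psi subr0.
have psi_step : forall s h, 0 <= h -> psi (s + h) <= psi s * (1 - M * h + (M * h) ^+ 2).
  move=> s h h0; rewrite /psi.
  have -> : M * (T - (s + h)) = M * (T - s) + - (M * h) by ring.
  rewrite expRD mulrA ler_pM2l; last by apply: mulr_gt0; [lra| exact: expR_gt0].
  apply: expR_negle; apply: mulr_ge0; lra.
rewrite -/(psi t0) leNgt; apply/negP => hlt.
pose S := [set s | t0 <= s <= T /\ psi s <= `|D s|].
have S0 : S t0 by split; [rewrite lexx t0T | exact: ltW].
have ubS : ubound S T by move=> s [/andP[]].
have hsup : has_sup S by split; [exists t0 | exists T].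
set tau := sup S.
have tau_ge : t0 <= tau by apply: sup_upper_bound.
have tau_le : tau <= T by apply: ge_sup => //; exists t0.
have htau : 0 <= tau <= T by apply/andP; split => //; lra.
have [d1 d1p Hd1] := loc tau htau 1 ltr01.
set K := `|Dd tau| + 1.
have K0 : 0 < K by rewrite /K; apply: ltr_wpDl.
have stepa : psi tau <= `|D tau|.
  apply/ler_addgt0Pr => rho rho0.
  have [del del0 [del1 del2 _]] := pos3 d1p (divr_gt0 rho0 K0) ltr01.
  have [s Ss hs] := sup_adherent del0 hsup; rewrite -/tau in hs.
  have s_le : s <= tau by apply: sup_upper_bound.
  case: Ss => /andP[t0s sT] hs2.
  have s01 : 0 <= s <= T by apply/andP; split => //; lra.
  have hd : `|s - tau| < d1 by rewrite distrC ger0_norm; lra.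
  have := loc_bound (Hd1 s s01 hd); rewrite -/K => hb.
  have : `|s - tau| * K <= rho.
    rewrite distrC ger0_norm ?subr_ge0 //.
    by rewrite -ler_pdivlMr //; lra.
  have := psi_dec s tau s_le.
  have := ler_normD (D tau) (D s - D tau).
  rewrite (addrC (D tau)) subrK.
  move=> ? ? ?; lra.
have tau_lt : tau < T.
  rewrite lt_neqAle tau_le andbT; apply/negP => /eqP tauT.
  have := psi_ge T (lexx T); rewrite -tauT in DT *.
  move: stepa; rewrite DT normr0; lra.
have stepc : `|D tau| <= psi tau.
  apply/ler_addgt0Pr => rho rho0.
  have Tt : 0 < T - tau by lra.
  have [h h0 [h1 h2 h3]] := pos3 d1p Tt (divr_gt0 rho0 K0).
  have s01 : 0 <= tau + h <= T by apply/andP; split; lra.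
  have nS : ~ S (tau + h).
    move=> Sh; have := sup_upper_bound hsup Sh; rewrite -/tau; lra.
  have hlt2 : `|D (tau + h)| < psi (tau + h).
    rewrite ltNge; apply/negP => hh; apply: nS; split => //.
    by apply/andP; split; lra.
  have hpd := psi_dec tau (tau + h) (ler_wpDr (ltW h0) (lexx tau)).
  have hd : `|tau + h - tau| < d1 by rewrite addrAC subrr add0r gtr0_norm.
  have := loc_lower (Hd1 _ s01 hd); rewrite -/K addrAC subrr add0r gtr0_norm //.
  have : h * K <= rho by rewrite -ler_pdivlMr.
  lra.
have Deq : `|D tau| = psi tau by apply/eqP; rewrite eq_le stepa stepc.
have Dtau1 : `|D tau| <= 1 by rewrite Deq psi_le1 //; lra.
have hDd := hyp tau htau Dtau1; rewrite Deq in hDd.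
have e2 : 0 < e / 2 by rewrite divr_gt0.
have [d2 d2p Hd2] := loc tau htau (e / 2) e2.
have ptau0 : 0 < psi tau by have := psi_ge tau tau_le; lra.
have Tt : 0 < T - tau by lra.
have c0 : 0 < e / (2 * psi tau * M ^+ 2).
  apply: divr_gt0 => //; apply: mulr_gt0; [apply: mulr_gt0 => //; lra | exact: exprn_gt0].
have [h h0 [h1 h2 h3]] := pos3 d2p Tt c0.
have s01 : 0 <= tau + h <= T by apply/andP; split; lra.
have hd : `|tau + h - tau| < d2 by rewrite addrAC subrr add0r gtr0_norm.
have := loc_lower (Hd2 _ s01 hd); rewrite addrAC subrr add0r gtr0_norm //.
rewrite Deq => hlow.
have hstep := psi_step tau h (ltW h0).
have pM0 : 0 < 2 * psi tau * M ^+ 2.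
  apply: mulr_gt0; [apply: mulr_gt0 => //; lra | exact: exprn_gt0].
have hc : psi tau * M ^+ 2 * h <= e / 2.
  move: h3; rewrite ler_pdivlMr //.
  move=> h3; have : h * (2 * psi tau * M ^+ 2) = 2 * (psi tau * M ^+ 2 * h) by ring.
  lra.
have hpg := psi_ge tau tau_le.
have key : psi (tau + h) <= `|D (tau + h)|.
  apply: le_trans hstep _; apply: le_trans _ hlow.
  have hh : h * (psi tau * M ^+ 2 * h) <= h * (psi tau - 3 * e / 2).
    rewrite ler_pM2l //; lra.
  rewrite /M in hh *; rewrite !expr2 in hh *; nra.
have : S (tau + h) by split => //; apply/andP; split; lra.
move/(sup_upper_bound hsup); rewrite -/tau; lra.
Qed.

End Barrier.

Section Cont.
Variable R : realType.

Lemma entry_le {m n} (M : 'M[R]_(m, n)) i j : `|M i j| <= `|M|.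
Proof.
rewrite [leRHS]/Num.Def.normr /= mx_normrE.
exact: (le_bigmax _ (fun ij : 'I_m * 'I_n => `|M ij.1 ij.2|) (i, j)).
Qed.

Lemma norm_mx_le {m n} (M : 'M[R]_(m, n)) c :
  0 <= c -> (forall i j, `|M i j| <= c) -> `|M| <= c.
Proof.
move=> c0 H; rewrite [leLHS]/Num.Def.normr /= mx_normrE.
by apply: bigmax_le => // -[i j] _; exact: H.
Qed.

Lemma normM_le {m n p} (X : 'M[R]_(m, n)) (Y : 'M[R]_(n, p)) :
  `|X *m Y| <= n%:R * `|X| * `|Y|.
Proof.
apply: norm_mx_le; first by rewrite mulr_ge0 // mulr_ge0.
move=> i j; rewrite mxE; apply: le_trans (ler_norm_sum _ _ _) _.
apply: le_trans (_ : \sum_(k < n) (`|X| * `|Y|) <= _).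
  apply: ler_sum => k _; rewrite normrM.
  by apply: ler_pM => //; exact: entry_le.
by rewrite sumr_const card_ord; rewrite -mulr_natl le_eqVlt; apply/orP; left; apply/eqP; ring.
Qed.

Lemma normT_le {m n} (X : 'M[R]_(m, n)) : `|X^T| <= `|X|.
Proof. by apply: norm_mx_le => // i j; rewrite mxE; exact: entry_le. Qed.

Lemma norm1_le n : `|(1%:M : 'M[R]_n)| <= 1.
Proof.
apply: norm_mx_le => // i j; rewrite mxE.
by case: (i == j); rewrite /= ?normr1 ?normr0.
Qed.


Lemma deriv_loc N (T : R) (Y Yd : R -> 'M[R]_N) : has_deriv_on T Y Yd ->
  forall t, 0 <= t <= T -> forall eta, 0 < eta -> exists2 d, 0 < d &
    forall s, 0 <= s <= T -> `|s - t| < d ->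
      `|Y s - Y t - (s - t) *: Yd t| <= eta * `|s - t|.
Proof.
move=> hD t ht eta eta0.
have := hD t ht; move/cvgrPdist_le => /(_ eta eta0).
rewrite /within /= => /nbhs_ballP [d d0 Hd].
exists d => // s hs hst.
have [->|st] := eqVneq s t.
  by rewrite !subrr scale0r subr0 !normr0 mulr0.
have := Hd s _ (conj hs st).
rewrite /ball /= distrC => /(_ hst) h.
have st0 : s - t != 0 by rewrite subr_eq0.
have -> : Y s - Y t - (s - t) *: Yd t =
    - ((s - t) *: (Yd t - (s - t)^-1 *: (Y s - Y t))).
  by rewrite scalerBr scalerA mulfV // scale1r opprB.
rewrite normrN normrZ mulrC ler_pM2r ?normr_gt0 //.
Qed.


Lemma deriv_cont N (T : R) (Y Yd : R -> 'M[R]_N) : has_deriv_on T Y Yd ->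
  {within `[0, T], continuous Y}.
Proof.
move=> hD; apply/subspace_continuousP => x; rewrite /= in_itv /= => hx.
apply/cvgrPdist_le => eps eps0.
set K := `|Yd x| + 1.
have K0 : 0 < K by rewrite /K; apply: ltr_wpDl.
have [d d0 Hd] := @deriv_loc N T Y Yd hD x hx 1 ltr01.
rewrite /within /=; apply/nbhs_ballP.
exists (Num.min d (eps / K)); first by rewrite /= lt_min d0 divr_gt0.
move=> s; rewrite /ball /= lt_min => /andP[hs1 hs2].
rewrite in_itv /= => hs.
rewrite distrC in hs1 hs2.
have := Hd s hs hs1 => h.
have h2 : `|Y s - Y x| <= `|s - x| * (`|Yd x| + 1).
  have -> : Y s - Y x = (Y s - Y x - (s - x) *: Yd x) + (s - x) *: Yd x.
    by rewrite subrK.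
  apply: le_trans (ler_normD _ _) _; rewrite normrZ; lra.
rewrite distrC; apply: le_trans h2 _.
rewrite -/K -ler_pdivlMr //; exact: ltW.
Qed.

Lemma bnd_within {V : normedModType R} {f : R -> V} {T : R} :
  {within `[0, T], continuous f} ->
  exists M, forall t, 0 <= t <= T -> `|f t| <= M.
Proof.
move=> cf.
have := compact_bounded (continuous_compact cf (@segment_compact _ 0 T)).
case=> M [Mreal HM]; exists (M + 1) => t ht.
apply: (HM (M + 1)); first by rewrite ltrDl.
by exists t => //; rewrite /= in_itv /=.
Qed.

Lemma cont_entry (A : set R) m n (F : R -> 'M[R]_(m, n)) i j :
  {within A, continuous F} -> {within A, continuous (fun t => F t i j)}.
Proof.
move=> cF x; have := cF x; move/cvgrPdist_lt => h.
apply/cvgrPdist_lt => e e0; apply: filterS (h e e0) => y.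
apply: le_lt_trans; have := entry_le (F x - F y) i j; by rewrite !mxE.
Qed.


Section CW.
Variable A : set R.
Local Notation cw f := {within A, continuous f}.

Lemma cw_cst (c : R) : cw (fun _ : R => c).
Proof. by move=> x; exact: cvg_cst. Qed.

Lemma cw_add (f g : R -> R) : cw f -> cw g -> cw (fun t => f t + g t).
Proof. by move=> cf cg x; apply: cvgD; [exact: cf|exact: cg]. Qed.

Lemma cw_mul (f g : R -> R) : cw f -> cw g -> cw (fun t => f t * g t).
Proof. by move=> cf cg x; apply: cvgM; [exact: cf|exact: cg]. Qed.

Lemma cw_inv (f : R -> R) : cw f -> (forall t, A t -> f t != 0) ->
  cw (fun t => (f t)^-1).
Proof.
move=> cf nz; apply/subspace_continuousP => x Ax.
apply: cvgV; first exact: nz.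
by move/subspace_continuousP: cf; apply.
Qed.

Lemma cw_sum (I : Type) (r : seq I) (P : pred I) (G : I -> R -> R) :
  (forall i, cw (G i)) -> cw (fun t => \sum_(i <- r | P i) G i t).
Proof.
move=> cG; elim: r => [|i r IH].
  have -> : (fun t => \sum_(i <- [::] | P i) G i t) = (fun _ => 0).
    by apply: funext => t; rewrite big_nil.
  exact: cw_cst.
have -> : (fun t => \sum_(k <- i :: r | P k) G k t) =
          (fun t => (if P i then G i t else 0) + \sum_(k <- r | P k) G k t).
  apply: funext => t; rewrite big_cons; by case: (P i); rewrite ?add0r.
apply: cw_add => //; case: (P i) => //; exact: cw_cst.
Qed.

Lemma cw_prod (I : Type) (r : seq I) (P : pred I) (G : I -> R -> R) :
  (forall i, cw (G i)) -> cw (fun t => \prod_(i <- r | P i) G i t).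
Proof.
move=> cG; elim: r => [|i r IH].
  have -> : (fun t => \prod_(i <- [::] | P i) G i t) = (fun _ => 1).
    by apply: funext => t; rewrite big_nil.
  exact: cw_cst.
have -> : (fun t => \prod_(k <- i :: r | P k) G k t) =
          (fun t => (if P i then G i t else 1) * \prod_(k <- r | P k) G k t).
  apply: funext => t; rewrite big_cons; by case: (P i); rewrite ?mul1r.
apply: cw_mul => //; case: (P i) => //; exact: cw_cst.
Qed.

Lemma cw_det n (F : R -> 'M[R]_n) : (forall i j, cw (fun t => F t i j)) ->
  cw (fun t => \det (F t)).
Proof.
move=> cF; rewrite /determinant.
apply: cw_sum => s; apply: cw_mul; first exact: cw_cst.
by apply: cw_prod => i; exact: cF.
Qed.

Lemma cw_adj n (F : R -> 'M[R]_n) : (forall i j, cw (fun t => F t i j)) ->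
  forall i j, cw (fun t => \adj (F t) i j).
Proof.
move=> cF i j.
have -> : (fun t => \adj (F t) i j) =
    (fun t => (-1) ^+ (j + i) * \det (row' j (col' i (F t)))).
  by apply: funext => t; rewrite mxE /cofactor.
apply: cw_mul; first exact: cw_cst.
apply: cw_det => a b.
have -> : (fun t => row' j (col' i (F t)) a b) = (fun t => F t (lift j a) (lift i b)).
  by apply: funext => t; rewrite !mxE.
exact: cF.
Qed.

End CW.


Lemma fin_bound (I : finType) (P : I -> R -> Prop) :
  (forall i, exists c, P i c) -> (forall i c c', c <= c' -> P i c -> P i c') ->
  exists C, 0 <= C /\ forall i, P i C.
Proof.
move=> h mono; have [c Hc] := choice h.
exists (\sum_i `|c i|); split; first by apply: sumr_ge0.
move=> i; apply: (mono i (c i)) (Hc i).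
rewrite (bigD1 i) //=; apply: le_trans (ler_norm _) _.
by rewrite ler_wpDr // sumr_ge0.
Qed.

Lemma inv_bnd n (T : R) (F : R -> 'M[R]_n) : {within `[0, T], continuous F} ->
  (forall t, 0 <= t <= T -> \det (F t) != 0) ->
  exists c, forall t, 0 <= t <= T -> `|invmx (F t)| <= c.
Proof.
move=> cF nz.
have ce := fun i j => @cont_entry _ _ _ F i j cF.
have cd := @cw_det _ _ F ce.
have ci : {within `[0, T], continuous (fun t => (\det (F t))^-1)}.
  by apply: cw_inv => // t; rewrite /= in_itv /=; exact: nz.
have cg : forall ij : 'I_n * 'I_n,
    {within `[0, T], continuous (fun t => (\det (F t))^-1 * \adj (F t) ij.1 ij.2)}.
  by move=> ij; apply: cw_mul => //; exact: (@cw_adj _ _ F ce).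
have [C [C0 HC]] := @fin_bound _ (fun ij c => forall t, 0 <= t <= T ->
     `|(\det (F t))^-1 * \adj (F t) ij.1 ij.2| <= c)
  (fun ij => bnd_within (cg ij))
  (fun ij c c' hc h t ht => le_trans (h t ht) hc).
exists C => t ht; apply: norm_mx_le => // i j.
rewrite /invmx unitmxE unitfE nz // mxE.
exact: (HC (i, j) t ht).
Qed.


Lemma negdef_det n (M : 'M[R]_n) : neg_def M -> \det M != 0.
Proof.
case=> _ H; apply/negP => /det0P [v v0 hv].
have := H v^T; rewrite trmx_eq0 v0 => /(_ isT).
by rewrite trmxK hv mul0mx mxE ltxx.
Qed.

Lemma eucl_entry n (x : 'cV[R]_n) i : eucl_norm x <= 1 -> `|x i 0| <= 1.
Proof.
move=> h0; have h : \sum_(k < n) x k 0 ^+ 2 <= 1.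
  by move: h0; rewrite /eucl_norm -[X in _ <= X]sqrtr1 ler_sqrt.
have : x i 0 ^+ 2 <= 1.
  apply: le_trans h; rewrite (bigD1 i) //= lerDl.
  by apply: sumr_ge0 => k _; exact: sqr_ge0.
rewrite -(real_normK (num_real _)) => h2.
have := normr_ge0 (x i 0); move=> ?. rewrite expr2 in h2. nra.
Qed.

Lemma eucl_upper m (y : 'cV[R]_m) (B : R) : 0 <= B ->
  (forall i, `|y i 0| <= B) -> eucl_norm y <= m%:R * B.
Proof.
move=> B0 hy; rewrite /eucl_norm.
have mB : 0 <= m%:R * B by rewrite mulr_ge0.
rewrite -(ger0_norm mB) -sqrtr_sqr ler_sqrt ?sqr_ge0 //.
apply: (@le_trans _ _ (\sum_(i < m) B ^+ 2)).
  apply: ler_sum => i _; rewrite -(real_normK (num_real _)).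
  have := hy i; have := normr_ge0 (y i 0); move=> ? ?; nra.
rewrite sumr_const card_ord -[B ^+ 2 *+ m]mulr_natl exprMn.
apply: ler_wpM2r; first exact: sqr_ge0.
case: m {y hy mB} => [|m]; first by rewrite expr2 mulr0.
by rewrite expr2 ler_peMl // ler1n.
Qed.



Lemma op2_bound m n (M : 'M[R]_(m, n)) :
  0 <= op2norm M /\ op2norm M <= m%:R * (n%:R * `|M|).
Proof.
rewrite /op2norm.
set E := [set eucl_norm (M *m x) | x in [set x : 'cV[R]_n | eucl_norm x <= 1]].
have ub : ubound E (m%:R * (n%:R * `|M|)).
  move=> y [x hx <-]; apply: eucl_upper; first by rewrite mulr_ge0.
  move=> i; rewrite mxE; apply: le_trans (ler_norm_sum _ _ _) _.
  apply: (@le_trans _ _ (\sum_(j < n) `|M|)); last first.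
    by rewrite sumr_const card_ord mulr_natl.
  apply: ler_sum => j _; rewrite normrM -[leRHS]mulr1.
  by apply: ler_pM => //; [exact: entry_le | exact: eucl_entry].
have x0 : E (eucl_norm (M *m 0)).
  exists 0 => //=; rewrite /eucl_norm big1 ?sqrtr0 // => i _.
  by rewrite mxE expr0n.
have ne : E !=set0 by exists (eucl_norm (M *m 0)).
have hs : has_sup E by split => //; exists (m%:R * (n%:R * `|M|)).
split; last exact: ge_sup.
apply: le_trans (sup_upper_bound hs x0); exact: sqrtr_ge0.
Qed.


Lemma norm_scalar n (e : R) : `|(e%:M : 'M[R]_n)| <= `|e|.
Proof.
apply: norm_mx_le => // i j; rewrite mxE.
by case: (i == j); rewrite /= ?mulr1n ?mulr0n ?normr0.
Qed.

Lemma normM_leb {m n p} (X : 'M[R]_(m, n)) (Y : 'M[R]_(n, p)) x y :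
  `|X| <= x -> `|Y| <= y -> `|X *m Y| <= n%:R * x * y.
Proof.
move=> hx hy; apply: le_trans (normM_le _ _) _.
have := normr_ge0 X; have := normr_ge0 Y => ? ?.
apply: ler_pM => //.
by apply: ler_wpM2l.
Qed.

Lemma step_bound N nw (A Q : 'M[R]_N) (B S : 'M[R]_(N,nw)) (Ri : 'M[R]_nw)
  (Y0 D Yd0 Ydk : 'M[R]_N) (e a b y s r : R) :
  0 < e -> `|A| <= a -> `|B| <= b -> `|Y0| <= y -> `|S| <= s -> `|Ri| <= r ->
  `|D| <= 1 ->
  Ydk + A^T *m (Y0 + D) + (Y0 + D) *m A + Q
    - ((Y0 + D) *m B + S) *m Ri *m ((Y0 + D) *m B + S)^T = - e%:M ->
  Yd0 + A^T *m Y0 + Y0 *m A + Q - (Y0 *m B + S) *m Ri *m (Y0 *m B + S)^T = 0 ->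
  `|Ydk - Yd0| <= (2 * N%:R * a + 2 * nw%:R * nw%:R * N%:R * (N%:R * y * b + s) * r * b
                   + nw%:R * nw%:R * N%:R * N%:R * b * b * r) * `|D| + e.
Proof.
move=> e0 ha hb hy hs hr hD h1 h0.
rewrite (rde_diff h1 h0).
set K0 := Y0 *m B + S; set E := D *m B.
set d := `|D|.
have d0 : 0 <= d := normr_ge0 _.
have a0 : 0 <= a := le_trans (normr_ge0 _) ha.
have b0 : 0 <= b := le_trans (normr_ge0 _) hb.
have y0 : 0 <= y := le_trans (normr_ge0 _) hy.
have s0 : 0 <= s := le_trans (normr_ge0 _) hs.
have r0 : 0 <= r := le_trans (normr_ge0 _) hr.
have Nn : 0 <= N%:R :> R := ler0n _ _.
have nwn : 0 <= nw%:R :> R := ler0n _ _.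
have ne : `|- e%:M : 'M[R]_N| <= e.
  by rewrite normrN; apply: le_trans (norm_scalar _ _) _; rewrite ger0_norm // ltW.
have n1 : `|A^T *m D| <= N%:R * a * d.
  by apply: normM_leb => //; apply: le_trans (normT_le _) ha.
have n2 : `|D *m A| <= N%:R * d * a by apply: normM_leb.
have nE : `|E| <= N%:R * d * b by apply: normM_leb.
have nET : `|E^T| <= N%:R * d * b := le_trans (normT_le _) nE.
have nK : `|K0| <= N%:R * y * b + s.
  apply: le_trans (ler_normD _ _) _; apply: lerD => //.
  exact: normM_leb.
have nKT : `|K0^T| <= N%:R * y * b + s := le_trans (normT_le _) nK.
set k := N%:R * y * b + s in nK nKT *.
have k0 : 0 <= k := le_trans (normr_ge0 _) nK.
have nKR : `|K0 *m Ri| <= nw%:R * k * r.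
  exact: normM_leb.
have nER : `|E *m Ri| <= nw%:R * (N%:R * d * b) * r.
  exact: normM_leb.
have n3 : `|K0 *m Ri *m E^T| <= nw%:R * (nw%:R * k * r) * (N%:R * d * b).
  exact: normM_leb.
have n4 : `|E *m Ri *m K0^T| <= nw%:R * (nw%:R * (N%:R * d * b) * r) * k.
  exact: normM_leb.
have n5 : `|E *m Ri *m E^T| <= nw%:R * (nw%:R * (N%:R * d * b) * r) * (N%:R * d * b).
  exact: normM_leb.
have tri : `|- e%:M - (A^T *m D + D *m A) +
    (K0 *m Ri *m E^T + E *m Ri *m K0^T + E *m Ri *m E^T)| <=
    `|- e%:M : 'M[R]_N| + (`|A^T *m D| + `|D *m A|) +
    (`|K0 *m Ri *m E^T| + `|E *m Ri *m K0^T| + `|E *m Ri *m E^T|).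
  apply: le_trans (ler_normD _ _) _; apply: lerD.
    apply: le_trans (ler_normB _ _) _; apply: lerD => //; exact: ler_normD.
  apply: le_trans (ler_normD _ _) _; apply: lerD => //; exact: ler_normD.
apply: le_trans tri _.
have hdd : (nw%:R * nw%:R * N%:R * N%:R * b * b * r) * (d * d) <=
           (nw%:R * nw%:R * N%:R * N%:R * b * b * r) * d.
  apply: ler_wpM2l; first by rewrite !mulr_ge0.
  by rewrite -[leRHS]mulr1; apply: ler_pM.
lra.
Qed.


Lemma zr2 (V : zmodType) (a b c d x y : V) :
  (a - b) - (c - d) - (x - y) = (a - c - x) - (b - d - y).
Proof.
rewrite !opprB !addrA.
by rewrite !(addrAC _ d) !(addrAC _ (-c)) !(addrAC _ y) !(addrAC _ (-x)) !(addrAC _ (-b)).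
Qed.

Lemma deriv_loc_diff N (T : R) (Y1 Y1d Y2 Y2d : R -> 'M[R]_N) :
  has_deriv_on T Y1 Y1d -> has_deriv_on T Y2 Y2d ->
  forall t, 0 <= t <= T -> forall eta, 0 < eta -> exists2 d, 0 < d &
    forall s, 0 <= s <= T -> `|s - t| < d ->
      `|(Y1 s - Y2 s) - (Y1 t - Y2 t) - (s - t) *: (Y1d t - Y2d t)| <= eta * `|s - t|.
Proof.
move=> h1 h2 t ht eta eta0.
have eta2 : 0 < eta / 2 by rewrite divr_gt0.
have [d1 d10 H1] := @deriv_loc N T Y1 Y1d h1 t ht _ eta2.
have [d2 d20 H2] := @deriv_loc N T Y2 Y2d h2 t ht _ eta2.
exists (Num.min d1 d2); first by rewrite lt_min d10 d20.
move=> s hs; rewrite lt_min => /andP[hs1 hs2].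
rewrite scalerBr zr2; apply: le_trans (ler_normB _ _) _.
have := H1 s hs hs1; have := H2 s hs hs2; move=> ? ?; lra.
Qed.

End Cont.

Theorem lemmaA2 (R : realType) (N nw : nat) (T : R)
  (Aa : R -> 'M[R]_N) (Ba : R -> 'M[R]_(N, nw)) (Q : R -> 'M[R]_N)
  (S : R -> 'M[R]_(N, nw)) (Rm : R -> 'M[R]_nw)
  (Y0 Y0d : R -> 'M[R]_N) (eps : nat -> R) (Y Yd : nat -> R -> 'M[R]_N) :
  0 < T ->
  {within `[0, T], continuous Aa} ->
  {within `[0, T], continuous Ba} ->
  {within `[0, T], continuous Q} ->
  {within `[0, T], continuous S} ->
  {within `[0, T], continuous Rm} ->
  (forall t, 0 <= t <= T -> symmetric_mx (Q t)) ->
  (forall t, 0 <= t <= T -> symmetric_mx (Rm t)) ->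
  (* 1. *)
  (forall t, 0 <= t <= T -> neg_def (Rm t)) ->
  (* 2. *)
  (forall t, 0 <= t <= T -> symmetric_mx (Y0 t)) ->
  has_deriv_on T Y0 Y0d ->
  Y0 T = 0 ->
  (forall t, 0 <= t <= T -> RDE Aa Ba Q S Rm t (Y0 t) (Y0d t) = 0) ->
  (* 3. *)
  (forall k, (0 < k)%N -> 0 < eps k) ->
  (forall k, (0 < k)%N -> eps (k.+1) <= eps k) ->
  eps @ \oo --> 0 ->
  (* 4. *)
  (forall k, (0 < k)%N -> forall t, 0 <= t <= T -> symmetric_mx (Y k t)) ->
  (forall k, (0 < k)%N -> has_deriv_on T (Y k) (Yd k)) ->
  (forall k, (0 < k)%N -> Y k T = 0) ->
  (forall k, (0 < k)%N -> forall t, 0 <= t <= T ->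
     RDE Aa Ba Q S Rm t (Y k t) (Yd k t) = - (eps k)%:M) ->
  forall t, 0 <= t <= T ->
    (fun k => op2norm (Y k t - Y0 t)) @ \oo --> (0 : R).
Proof.
move=> T0 cA cB cQ cS cR _ _ negR _ dY0 Y0T rde0 epspos _ epscvg _ dY YT rdeY t ht.
have [a Ha] := @bnd_within R _ _ _ cA.
have [b Hb] := @bnd_within R _ _ _ cB.
have [y Hy] := @bnd_within R _ _ _ (@deriv_cont R _ _ _ _ dY0).
have [s Hs] := @bnd_within R _ _ _ cS.
have [r Hr] := @inv_bnd R _ _ _ cR (fun t ht => @negdef_det R _ _ (negR t ht)).
have h0T : (0 : R) <= 0 <= T by rewrite lexx /= ltW.
set L := 2 * N%:R * a + 2 * nw%:R * nw%:R * N%:R * (N%:R * y * b + s) * r * b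
                   + nw%:R * nw%:R * N%:R * N%:R * b * b * r.
have a0 : 0 <= a := le_trans (normr_ge0 _) (Ha 0 h0T).
have b0 : 0 <= b := le_trans (normr_ge0 _) (Hb 0 h0T).
have y0 : 0 <= y := le_trans (normr_ge0 _) (Hy 0 h0T).
have s0 : 0 <= s := le_trans (normr_ge0 _) (Hs 0 h0T).
have r0 : 0 <= r := le_trans (normr_ge0 _) (Hr 0 h0T).
have L0 : 0 <= L.
  by rewrite /L !addr_ge0 ?mulr_ge0 ?ler0n // addr_ge0 // !mulr_ge0 ?ler0n.
set C := 2 * expR ((L + 1) * T).
have C0 : 0 < C by rewrite /C mulr_gt0 ?expR_gt0.
have est : forall k, (0 < k)%N -> eps k * C <= 1 ->
    `|Y k t - Y0 t| <= eps k * C.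
  move=> k kp small.
  have ek := epspos k kp.
  have := @barrier R _ T L (eps k) (fun t => Y k t - Y0 t) (fun t => Yd k t - Y0d t)
    ek L0.
  rewrite YT // Y0T subrr => /(_ erefl).
  move=> /(_ (@deriv_loc_diff R _ _ _ _ _ _ (dY k kp) dY0)).
  have hyp : forall t, 0 <= t <= T -> `|Y k t - Y0 t| <= 1 ->
      `|Yd k t - Y0d t| <= L * `|Y k t - Y0 t| + eps k.
    move=> u hu hD.
    have h1 := rdeY k kp u hu; have h2 := rde0 u hu.
    rewrite /RDE in h1 h2.
    have hYk : Y k u = Y0 u + (Y k u - Y0 u) by rewrite addrC subrK.
    rewrite hYk in h1.
    exact: (@step_bound R _ _ _ _ _ _ _ _ _ _ _ _ _ _ _ _ _ ek (Ha u hu) (Hb u hu) (Hy u hu) (Hs u hu) (Hr u hu) hD h1 h2).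
  move=> /(_ hyp).
  have sm : 2 * eps k * expR ((L + 1) * T) <= 1.
    by rewrite [2 * _]mulrC -mulrA; exact: small.
  move=> /(_ sm t ht) h; apply: le_trans h _.
  rewrite -mulrA mulrCA ler_pM2l //.
  rewrite /C ler_pM2l // ler_expR ler_pM2l; last by lra.
  by case/andP: ht => ? ?; lra.
apply/cvgrPdist_le => e e0.
set m := Num.min 1 e.
set NNv : R := N%:R * N%:R + 1.
set del := m / (C * NNv).
have NN : 0 < NNv by rewrite ltr_pwDr // mulr_ge0.
have m0 : 0 < m by rewrite lt_min ltr01 e0.
have del0 : 0 < del by rewrite /del divr_gt0 // mulr_gt0.
have hev := (cvgrPdist_le _ _).1 epscvg del del0.
near=> k.
have kp : (0 < k)%N by near: k; exact: nbhs_infty_gt.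
have hk : `|0 - eps k| <= del by near: k; exact: hev.
have ek := epspos k kp.
rewrite sub0r normrN gtr0_norm // in hk.
have hkC : eps k * C <= m / NNv.
  apply: (@le_trans _ _ (del * C)); first by rewrite ler_pM2r.
  rewrite /del le_eqVlt; apply/orP; left; apply/eqP; field.
  by apply/andP; split; apply: lt0r_neq0.
have q0 : 0 < m / NNv by rewrite divr_gt0.
have qm : m / NNv * NNv = m by rewrite mulrVK ?unitfE ?lt0r_neq0.
have m1 : m <= 1 by rewrite /m ge_min lexx.
have me : m <= e by rewrite /m ge_min lexx orbT.
have NN1 : 1 <= NNv by rewrite /NNv lerDr mulr_ge0.
have hq1 : m / NNv <= 1.
  rewrite ler_pdivrMr; last by lra.
  lra.
have hD := est k kp (le_trans hkC hq1).
have [op0 op1] := @op2_bound R _ _ (Y k t - Y0 t).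
rewrite sub0r normrN ger0_norm //.
apply: (le_trans op1).
have Nn : 0 <= N%:R :> R := ler0n _ _.
have h1 : N%:R * (N%:R * `|Y k t - Y0 t|) <= N%:R * N%:R * (m / NNv).
  rewrite mulrA ler_wpM2l ?mulr_ge0 //; exact: le_trans hD hkC.
apply: le_trans h1 _.
have h2 : N%:R * N%:R * (m / NNv) <= NNv * (m / NNv).
  by apply: ler_wpM2r; [exact: ltW | rewrite /NNv lerDl].
apply: le_trans h2 _; rewrite mulrC qm //.
Unshelve. all: by end_near.
Qed.
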